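(* In the splitting setting (see context), define for $a,b\in\Gamma(E_1)$, $\alpha,\beta\in\Gamma(E_2)$: $R^{\to}(a,b)\alpha:=\nabla^{\to}_a\nabla^{\to}_b\alpha-\nabla^{\to}_b\nabla^{\to}_a\alpha-\nabla^{\to}_{a\diamond_1b}\alpha$ and $R^{\leftarrow}(\alpha,\beta)a:=\nabla^{\leftarrow}_\alpha\nabla^{\leftarrow}_\beta a-\nabla^{\leftarrow}_\beta\nabla^{\leftarrow}_\alpha a-\nabla^{\leftarrow}_{\alpha\diamond_2\beta}a$. Then $R^{\to}(a,b)\alpha$ is $C^\infty(M)$-linear in each of $a,b,\alpha$, skew-symmetric in $(a,b)$, and for fixed $a,b$ the endomorphism $R^{\to}(a,b)$ of $E_2$ is skew-symmetric with respect to $\langle\cdot,\cdot\rangle_2$; i.e. $R^{\to}$ is a section of $\wedge^2E_1^*\otimes\mathfrak o(E_2)\cong\wedge^2E_1^*\otimes\wedge^2E_2^*$. Analogously $R^{\leftarrow}$ is a section of $\wedge^2E_2^*\otimes\mathfrak o(E_1)\cong\wedge^2E_2^*\otimes\wedge^2E_1^*$. Here $\mathfrak o(V)$ denotes the bundle of endomorphisms of $V$ that are skew-symmetric for the given fiberwise metric.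
   Context: A (real) Courant algebroid is a real vector bundle $E\to M$ with a symmetric nondegenerate fiberwise bilinear form $\langle\cdot,\cdot\rangle$, an $\mathbb R$-bilinear bracket $\diamond$ on $\Gamma(E)$ and a bundle map $\rho:E\to TM$ such that for all $\phi,\phi_1,\phi_2,\phi'\in\Gamma(E)$, $f\in C^\infty(M)$: (J) $\phi\diamond(\phi_1\diamond\phi_2)=\phi_1\diamond(\phi\diamond\phi_2)+(\phi\diamond\phi_1)\diamond\phi_2$; (L) $\phi\diamond(f\phi')=(\rho(\phi)f)\phi'+f(\phi\diamond\phi')$; (S) $\phi\diamond\phi=\tfrac12 D\langle\phi,\phi\rangle$; (I) $\rho(\phi)\langle\phi',\phi'\rangle=2\langle\phi\diamond\phi',\phi'\rangle$, where $\langle Df,\phi\rangle=\rho(\phi)f$. Splitting setting: $E$ is a Courant algebroid, $E=E_1\oplus E_2$ with $E_2=E_1^\perp$; $\iota_k$, $\mathrm{pr}_k$ the inclusions/projections; each $E_k$ is a Courant algebroid with anchor $\rho_k=\rho\circ\iota_k$, pairing $\langle a,b\rangle_k=\langle\iota_ka,\iota_kb\rangle$, bracket $a\diamond_kb=\mathrm{pr}_k(\iota_ka\diamond\iota_kb)$. Define $\nabla^{\to}_a\beta:=\mathrm{pr}_2(\iota_1a\diamond\iota_2\beta)$ and $\nabla^{\leftarrow}_\beta a:=\mathrm{pr}_1(\iota_2\beta\diamond\iota_1a)$ for $a\in\Gamma(E_1)$, $\beta\in\Gamma(E_2)$. *)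

(* Defs.v *)
(* Algebraic (Serre--Swan) model of Courant algebroids:
   C   : the algebra C^oo(M) of smooth functions, an algebra over the reals K,
   V   : the C-module Gamma(E) of smooth sections of E,
   rho : the anchor, a C-linear map from sections to K-linear derivations of C
         (vector fields = derivations of C^oo(M)). *)
From HB Require Import structures.
From mathcomp Require Import all_boot all_order all_algebra.
Set Implicit Arguments. Unset Strict Implicit. Unset Printing Implicit Defensive.
Import Order.TTheory GRing.Theory Num.Theory.
Local Open Scope ring_scope.

Section Courant.
Variables (K : numFieldType) (C : comAlgType K).

Definition Clinear (U W : lmodType C) (f : U -> W) : Prop :=
  forall (c : C) (u v : U), f (c *: u + v) = c *: f u + f v.

Definition Cfunctional (U : lmodType C) (l : U -> C) : Prop :=
  forall (c : C) (u v : U), l (c *: u + v) = c * l u + l v.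

(* Gamma(E) is the module of sections of a vector bundle:
   finitely generated projective (Serre--Swan). *)
Definition fg_projective (U : lmodType C) : Prop :=
  exists (n : nat) (s : U -> 'rV[C]_n) (r : 'rV[C]_n -> U),
    Clinear s /\ Clinear r /\ forall u, r (s u) = u.

(* symmetric C-bilinear pairing, fiberwise nondegenerate
   (i.e. phi |-> <phi, .> is an isomorphism Gamma(E) ~ Gamma(E^* )) *)
Definition nondeg_sym_pairing (U : lmodType C) (pair : U -> U -> C) : Prop :=
  (forall u v, pair u v = pair v u) /\
  (forall u, Cfunctional (pair u)) /\
  (forall u, (forall v, pair u v = 0) -> u = 0) /\
  (forall l : U -> C, Cfunctional l -> exists u, forall v, pair u v = l v).

Definition anchor (U : lmodType C) (rho : U -> C -> C) : Prop :=
  (forall (c : C) (u v : U) (f : C), rho (c *: u + v) f = c * rho u f + rho v f) /\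
  (forall u (k : K) (f g : C), rho u (k *: f + g) = k *: rho u f + rho u g) /\
  (forall u (f g : C), rho u (f * g) = f * rho u g + rho u f * g).

Definition Kbilinear (U : lmodType C) (br : U -> U -> U) : Prop :=
  (forall (k : K) u v w, br (k%:A *: u + v) w = k%:A *: br u w + br v w) /\
  (forall (k : K) u v w, br w (k%:A *: u + v) = k%:A *: br w u + br w v).

Definition is_D (U : lmodType C) (pair : U -> U -> C) (rho : U -> C -> C)
  (f : C) (Df : U) : Prop := forall phi, pair Df phi = rho phi f.

Definition is_courant (U : lmodType C) (pair : U -> U -> C)
  (br : U -> U -> U) (rho : U -> C -> C) : Prop :=
  fg_projective U /\ nondeg_sym_pairing pair /\ anchor rho /\ Kbilinear br /\
   (* (J) *)
   (forall phi phi1 phi2,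
      br phi (br phi1 phi2) = br phi1 (br phi phi2) + br (br phi phi1) phi2) /\
   (* (L) *)
   (forall phi (f : C) phi', br phi (f *: phi') = rho phi f *: phi' + f *: br phi phi') /\
   (* (S) *)
   (forall phi Dq, is_D pair rho (pair phi phi) Dq -> br phi phi = (2%:R^-1 : K)%:A *: Dq) /\
   (* (I) *)
   (forall phi phi', rho phi (pair phi' phi') = 2%:R * pair (br phi phi') phi').

Definition splitting_setting (U U1 U2 : lmodType C) (pair : U -> U -> C)
  (br : U -> U -> U) (rho : U -> C -> C)
  (i1 : U1 -> U) (i2 : U2 -> U) (p1 : U -> U1) (p2 : U -> U2) : Prop :=
  is_courant pair br rho /\
      (Clinear i1 /\ Clinear i2 /\ Clinear p1 /\ Clinear p2) /\
      ((forall a, p1 (i1 a) = a) /\ (forall b, p2 (i2 b) = b) /\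
      (forall a, p2 (i1 a) = 0) /\ (forall b, p1 (i2 b) = 0) /\
      (forall phi, i1 (p1 phi) + i2 (p2 phi) = phi)) /\
      (* E2 = E1^perp : together with the direct sum this is equivalent *)
      (forall a b, pair (i1 a) (i2 b) = 0) /\
      is_courant (fun a b => pair (i1 a) (i1 b)) (fun a b => p1 (br (i1 a) (i1 b)))
                 (fun a => rho (i1 a)) /\
      is_courant (fun a b => pair (i2 a) (i2 b)) (fun a b => p2 (br (i2 a) (i2 b)))
                 (fun a => rho (i2 a)).

Section Curv.
Variables (U U1 U2 : lmodType C) (br : U -> U -> U)
  (i1 : U1 -> U) (i2 : U2 -> U) (p1 : U -> U1) (p2 : U -> U2).

Definition br1 (a b : U1) : U1 := p1 (br (i1 a) (i1 b)).
Definition br2 (a b : U2) : U2 := p2 (br (i2 a) (i2 b)).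
Definition nabla_to (a : U1) (beta : U2) : U2 := p2 (br (i1 a) (i2 beta)).
Definition nabla_from (beta : U2) (a : U1) : U1 := p1 (br (i2 beta) (i1 a)).

Definition R_to (a b : U1) (alpha : U2) : U2 :=
  nabla_to a (nabla_to b alpha) - nabla_to b (nabla_to a alpha)
  - nabla_to (br1 a b) alpha.
Definition R_from (alpha beta : U2) (a : U1) : U1 :=
  nabla_from alpha (nabla_from beta a) - nabla_from beta (nabla_from alpha a)
  - nabla_from (br2 alpha beta) a.
End Curv.

(* T : (X -> Y -> Z -> W) is a section of  wedge^2 X^* (x) o(Z)  w.r.t. pairing pZ *)
Definition wedge2_o_section (X Z : lmodType C) (pZ : Z -> Z -> C)
  (T : X -> X -> Z -> Z) : Prop :=
  [/\ (forall (c : C) x x' y z, T (c *: x + x') y z = c *: T x y z + T x' y z),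
      (forall (c : C) x y y' z, T x (c *: y + y') z = c *: T x y z + T x y' z),
      (forall (c : C) x y z z', T x y (c *: z + z') = c *: T x y z + T x y z'),
      (forall x y z, T x y z = - T y x z) &
      (forall x y z w, pZ (T x y z) w + pZ z (T x y w) = 0)].

End Courant.

(* Main.v *)
Require Import Defs.
From HB Require Import structures.
From mathcomp Require Import all_boot all_order all_algebra.
From mathcomp Require Import ring.
Import GRing.Theory Num.Theory.
Set Implicit Arguments. Unset Strict Implicit. Unset Printing Implicit Defensive.
Local Open Scope ring_scope.

Section SQdef.
Variables (C : comNzRingType) (U : lmodType C).
Definition SQ : Type := (C * U)%type.
HB.instance Definition _ := GRing.Zmodule.copy SQ (C * U)%type.
Definition sq_one : SQ := (1, 0).
Definition sq_mul (x y : SQ) : SQ := (x.1 * y.1, x.1 *: y.2 + y.1 *: x.2).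
Lemma sq_mulA : associative sq_mul.
Proof.
move=> [a u] [b v] [c w]; rewrite /sq_mul /=; congr pair; first by rewrite mulrA.
by rewrite !scalerDr !scalerA !addrA [c * a]mulrC [c * b]mulrC [b * c]mulrC.
Qed.
Lemma sq_mulC : commutative sq_mul.
Proof. by move=> [a u] [b v]; rewrite /sq_mul /= mulrC addrC. Qed.
Lemma sq_mul1 : left_id sq_one sq_mul.
Proof. by move=> [a u]; rewrite /sq_mul /= mul1r scale1r scaler0 addr0. Qed.
Lemma sq_mulD : left_distributive sq_mul +%R.
Proof.
move=> [a u] [b v] [c w]; rewrite /sq_mul /=; congr pair; first by rewrite mulrDl.
by rewrite scalerDl scalerDr !addrA; congr (_ + _); rewrite addrAC.
Qed.
Lemma sq_one_neq0 : sq_one != 0.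
Proof. by apply/eqP; case=> /eqP; rewrite oner_eq0. Qed.
HB.instance Definition _ := GRing.Zmodule_isComNzRing.Build SQ sq_mulA sq_mulC sq_mul1 sq_mulD sq_one_neq0.

Definition emb (x : U) : SQ := (0, x).
Definition sc (c : C) : SQ := (c, 0).
Lemma embD x y : emb (x + y) = emb x + emb y. Proof. by rewrite /emb; congr pair; rewrite addr0. Qed.
Lemma embN x : emb (- x) = - emb x. Proof. by rewrite /emb /=; congr pair; rewrite oppr0. Qed.
Lemma embB x y : emb (x - y) = emb x - emb y. Proof. by rewrite embD embN. Qed.
Lemma emb0 : emb 0 = 0. Proof. by []. Qed.
Lemma embZ c x : emb (c *: x) = sc c * emb x.
Proof. by rewrite /emb /sc; rewrite [RHS]/GRing.mul /= /sq_mul /= mulr0 scale0r addr0. Qed.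
Lemma emb_inj x y : emb x = emb y -> x = y. Proof. by case. Qed.
Lemma scD a b : sc (a + b) = sc a + sc b. Proof. by rewrite /sc; congr pair; rewrite addr0. Qed.
Lemma scN a : sc (- a) = - sc a. Proof. by rewrite /sc; congr pair; rewrite oppr0. Qed.
Lemma scB a b : sc (a - b) = sc a - sc b. Proof. by rewrite scD scN. Qed.
Lemma scM a b : sc (a * b) = sc a * sc b.
Proof. by rewrite /sc [RHS]/GRing.mul /= /sq_mul /= !scaler0 addr0. Qed.
Lemma sc0 : sc 0 = 0. Proof. by []. Qed.
Lemma sc1 : sc 1 = 1. Proof. by []. Qed.
End SQdef.

Ltac sqring := rewrite ?(embD, embN, embB, emb0, embZ, scD, scN, scB, scM, sc0, sc1); ring.
Ltac modring := apply: emb_inj; sqring.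


Lemma dbl0 (V : zmodType) (x : V) : x + x = x -> x = 0.
Proof. by move=> h; apply: (@addrI _ x); rewrite h addr0. Qed.

Lemma addf0N (V W : zmodType) (h : V -> W) :
  {morph h : x y / x + y} -> h 0 = 0 /\ {morph h : x / - x}.
Proof.
move=> hD; have h0 : h 0 = 0 by apply: dbl0; rewrite -hD addr0.
split=> // x; apply/eqP; rewrite -addr_eq0 -hD addNr h0 //.
Qed.

Lemma eq_sub0 (V : zmodType) (x y z : V) : x = y -> z = x - y -> z = 0.
Proof. by move=> -> ->; rewrite subrr. Qed.

Section Lin.
Variables (K : numFieldType) (C : comAlgType K).

Lemma ClinD (U W : lmodType C) (f : U -> W) : Clinear f -> {morph f : x y / x + y}.
Proof. by move=> hf x y; have := hf 1 x y; rewrite !scale1r. Qed.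
Lemma Clin0 (U W : lmodType C) (f : U -> W) : Clinear f -> f 0 = 0.
Proof. by move=> hf; case: (addf0N (ClinD hf)). Qed.
Lemma ClinN (U W : lmodType C) (f : U -> W) : Clinear f -> {morph f : x / - x}.
Proof. by move=> hf; case: (addf0N (ClinD hf)). Qed.
Lemma ClinB (U W : lmodType C) (f : U -> W) : Clinear f -> {morph f : x y / x - y}.
Proof. by move=> hf x y; rewrite ClinD // ClinN. Qed.
Lemma ClinZ (U W : lmodType C) (f : U -> W) : Clinear f -> forall c x, f (c *: x) = c *: f x.
Proof. by move=> hf c x; have := hf c x 0; rewrite !addr0 Clin0 // addr0. Qed.

Lemma CfunD (U : lmodType C) (f : U -> C) : Cfunctional f -> {morph f : x y / x + y}.
Proof. by move=> hf x y; have := hf 1 x y; rewrite scale1r mul1r. Qed.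
Lemma Cfun0 (U : lmodType C) (f : U -> C) : Cfunctional f -> f 0 = 0.
Proof. by move=> hf; case: (addf0N (CfunD hf)). Qed.
Lemma CfunN (U : lmodType C) (f : U -> C) : Cfunctional f -> {morph f : x / - x}.
Proof. by move=> hf; case: (addf0N (CfunD hf)). Qed.
Lemma CfunB (U : lmodType C) (f : U -> C) : Cfunctional f -> {morph f : x y / x - y}.
Proof. by move=> hf x y; rewrite CfunD // CfunN. Qed.
Lemma CfunZ (U : lmodType C) (f : U -> C) : Cfunctional f -> forall c x, f (c *: x) = c * f x.
Proof. by move=> hf c x; have := hf c x 0; rewrite !addr0 Cfun0 // addr0. Qed.

Lemma ann_trick (U : lmodType C) (L : U -> C) : fg_projective U -> Cfunctional L ->
  (forall y (x : U), L y *: x = 0) -> forall y, L y = 0.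
Proof.
case=> n [s [r [hs [hr hrs]]]] hL hann y.
have hLr : forall v : 'rV[C]_n, L (r v) = \sum_(k < n) v 0 k * L (r 'e_k).
  move=> v; rewrite {1}(row_sum_delta v).
  rewrite (big_morph (fun w => L (r w)) (id1 := 0) (op1 := +%R)); first last.
  - by rewrite Clin0 // Cfun0.
  - by move=> x1 x2 /=; rewrite ClinD // CfunD.
  by apply: eq_bigr => k _; rewrite ClinZ // CfunZ.
rewrite -(hrs y) hLr big1 // => k _.
have : s (L (r 'e_k) *: y) = 0 by rewrite hann Clin0.
rewrite ClinZ // => /(congr1 (fun m : 'rV[C]_n => m 0 k)); rewrite mxE mxE.
by rewrite mulrC.
Qed.

Lemma half2 : ((2%:R^-1 : K)%:A + (2%:R^-1 : K)%:A : C) = 1.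
Proof.
rewrite -scalerDl; have h2 : (2%:R : K) != 0 by rewrite pnatr_eq0.
have -> : (2%:R^-1 + 2%:R^-1 : K) = 1 by field.
by rewrite scale1r.
Qed.
End Lin.

Section Gen.
Variables (K : numFieldType) (C : comAlgType K) (U : lmodType C)
  (pair : U -> U -> C) (br : U -> U -> U) (rho : U -> C -> C).
Hypothesis HC : is_courant pair br rho.

Let hfg : fg_projective U. Proof. by case: HC. Qed.
Let hpair : nondeg_sym_pairing pair. Proof. by case: HC => _ []. Qed.
Let hanc : anchor rho. Proof. by case: HC => _ [_ []]. Qed.
Let hbil : Kbilinear br. Proof. by case: HC => _ [_ [_ []]]. Qed.
Let HJ : forall phi phi1 phi2,
      br phi (br phi1 phi2) = br phi1 (br phi phi2) + br (br phi phi1) phi2.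
Proof. by case: HC => _ [_ [_ [_ []]]]. Qed.
Let HL : forall phi (f : C) phi', br phi (f *: phi') = rho phi f *: phi' + f *: br phi phi'.
Proof. by case: HC => _ [_ [_ [_ [_ []]]]]. Qed.
Let HS : forall phi Dq, is_D pair rho (pair phi phi) Dq -> br phi phi = (2%:R^-1 : K)%:A *: Dq.
Proof. by case: HC => _ [_ [_ [_ [_ [_ []]]]]]. Qed.
Let HI : forall phi phi', rho phi (pair phi' phi') = 2%:R * pair (br phi phi') phi'.
Proof. by case: HC => _ [_ [_ [_ [_ [_ []]]]]]. Qed.

Lemma pair_sym u v : pair u v = pair v u. Proof. by case: hpair. Qed.
Lemma pair_fun2 u : Cfunctional (pair u). Proof. by case: hpair => _ [h _]; apply: h. Qed.
Lemma pair_fun1 v : Cfunctional (pair^~ v).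
Proof. by move=> c x y; rewrite !(pair_sym _ v) pair_fun2. Qed.
Lemma pair_ex l : Cfunctional l -> exists u, forall v, pair u v = l v.
Proof. by case: hpair => _ [_ [_ h]]; apply: h. Qed.
Lemma rho_fun f : Cfunctional (rho^~ f). Proof. by case: hanc => h _ c u v; rewrite h. Qed.
Lemma rhoD2 u : {morph rho u : x y / x + y}.
Proof. by case: hanc => _ [h _] x y; have := h u 1 x y; rewrite !scale1r. Qed.
Lemma rho02 u : rho u 0 = 0. Proof. by case: (addf0N (rhoD2 u)). Qed.
Lemma rhoN2 u : {morph rho u : x / - x}. Proof. by case: (addf0N (rhoD2 u)). Qed.
Lemma rhoB2 u : {morph rho u : x y / x - y}. Proof. by move=> x y; rewrite rhoD2 rhoN2. Qed.
Lemma rhoM2 u f g : rho u (f * g) = f * rho u g + rho u f * g.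
Proof. by case: hanc => _ [_ h]; apply: h. Qed.
Lemma brD1 w : {morph br^~ w : x y / x + y}.
Proof. by case: hbil => h _ x y; have := h 1 x y w; rewrite !scale1r. Qed.
Lemma brD2 w : {morph br w : x y / x + y}.
Proof. by case: hbil => _ h x y; have := h 1 x y w; rewrite !scale1r. Qed.
Lemma br01 w : br 0 w = 0. Proof. by case: (addf0N (brD1 w)). Qed.
Lemma brN1 w : {morph br^~ w : x / - x}. Proof. by case: (addf0N (brD1 w)). Qed.
Lemma brB1 w : {morph br^~ w : x y / x - y}. Proof. by move=> x y; rewrite brD1 brN1. Qed.
Lemma br02 w : br w 0 = 0. Proof. by case: (addf0N (brD2 w)). Qed.
Lemma brN2 w : {morph br w : x / - x}. Proof. by case: (addf0N (brD2 w)). Qed.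
Lemma brB2 w : {morph br w : x y / x - y}. Proof. by move=> x y; rewrite brD2 brN2. Qed.
Lemma brZ2 w f x : br w (f *: x) = rho w f *: x + f *: br w x. Proof. exact: HL. Qed.

Lemma pairD1 v : {morph pair^~ v : x y / x + y}. Proof. exact: CfunD (pair_fun1 v). Qed.
Lemma pairN1 v : {morph pair^~ v : x / - x}. Proof. exact: CfunN (pair_fun1 v). Qed.
Lemma pairB1 v : {morph pair^~ v : x y / x - y}. Proof. exact: CfunB (pair_fun1 v). Qed.
Lemma pairZ1 v c x : pair (c *: x) v = c * pair x v. Proof. exact: (CfunZ (pair_fun1 v) c x). Qed.
Lemma pair01 v : pair 0 v = 0. Proof. exact: Cfun0 (pair_fun1 v). Qed.
Lemma pairD2 v : {morph pair v : x y / x + y}. Proof. exact: CfunD (pair_fun2 v). Qed.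
Lemma pairN2 v : {morph pair v : x / - x}. Proof. exact: CfunN (pair_fun2 v). Qed.
Lemma pairB2 v : {morph pair v : x y / x - y}. Proof. exact: CfunB (pair_fun2 v). Qed.
Lemma pairZ2 v c x : pair v (c *: x) = c * pair v x. Proof. exact: (CfunZ (pair_fun2 v) c x). Qed.
Lemma pair02 v : pair v 0 = 0. Proof. exact: Cfun0 (pair_fun2 v). Qed.
Lemma rhoD1 f : {morph rho^~ f : x y / x + y}. Proof. exact: CfunD (rho_fun f). Qed.
Lemma rhoN1 f : {morph rho^~ f : x / - x}. Proof. exact: CfunN (rho_fun f). Qed.
Lemma rhoB1 f : {morph rho^~ f : x y / x - y}. Proof. exact: CfunB (rho_fun f). Qed.
Lemma rhoZ1 f c x : rho (c *: x) f = c * rho x f. Proof. exact: (CfunZ (rho_fun f) c x). Qed.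
Lemma rho01 f : rho 0 f = 0. Proof. exact: Cfun0 (rho_fun f). Qed.

Lemma Dex g : exists Dg, is_D pair rho g Dg.
Proof. exact: pair_ex (rho_fun g). Qed.

Lemma brS phi psi Dq : is_D pair rho (pair phi psi) Dq -> br phi psi + br psi phi = Dq.
Proof.
move=> hq; have [Da hDa] := Dex (pair phi phi); have [Db hDb] := Dex (pair psi psi).
have hs : is_D pair rho (pair (phi + psi) (phi + psi)) (Da + (Dq + Dq) + Db).
  move=> x; rewrite !pairD1 hDa hDb hq !pairD2 !rhoD2 (pair_sym psi phi); ring.
have := HS hs; rewrite brD1 !brD2 (HS hDa) (HS hDb) => E.
transitivity (((2%:R^-1 : K)%:A + (2%:R^-1 : K)%:A) *: Dq); last by rewrite half2 scale1r.
apply: emb_inj; move: E => /(congr1 (@emb _ _)).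
rewrite ?(embD, embN, embB, emb0, embZ, scD, scN, scB, scM, sc0, sc1) => E.
apply: (@addrI _ (sc U (2%:R^-1 : K)%:A * emb Da + sc U (2%:R^-1 : K)%:A * emb Db)).
transitivity (sc U (2%:R^-1 : K)%:A * emb Da + emb (br phi psi) + (emb (br psi phi) + sc U (2%:R^-1 : K)%:A * emb Db)); first by ring.
by rewrite E; ring.
Qed.

Lemma pairI phi u v : rho phi (pair u v) = pair (br phi u) v + pair u (br phi v).
Proof.
have E := HI phi (u + v); have Eu := HI phi u; have Ev := HI phi v.
rewrite !(pairD1, pairD2, rhoD2, brD2) (pair_sym v u) in E.
have E2 : 2%:R * (rho phi (pair u v) - (pair (br phi u) v + pair (br phi v) u)) = 0.
  by apply: (eq_sub0 E); rewrite Eu Ev; ring.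
rewrite (pair_sym u (br phi v)); apply/eqP; rewrite -subr_eq0; apply/eqP.
set X := (rho phi (pair u v) - _).
have -> : X = ((2%:R^-1 : K)%:A + (2%:R^-1 : K)%:A) * X by rewrite half2 mul1r.
have -> : ((2%:R^-1 : K)%:A + (2%:R^-1 : K)%:A) * X = (2%:R^-1 : K)%:A * (2%:R * X) by ring.
by rewrite E2 mulr0.
Qed.

Lemma rho_hom phi psi f : rho (br phi psi) f = rho phi (rho psi f) - rho psi (rho phi f).
Proof.
apply/eqP; rewrite -subr_eq0; apply/eqP.
pose L := fun psi => rho (br phi psi) f - (rho phi (rho psi f) - rho psi (rho phi f)).
apply: (@ann_trick _ _ _ L hfg) => [c u v | y x].
  by rewrite /L brD2 brZ2 !rhoD1 !rhoZ1 !rhoD2 !rhoM2; ring.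
have E := HJ phi y (f *: x).
rewrite !(brZ2, brD2) (HJ phi y x) in E.
apply: (@emb_inj _ U); rewrite emb0; apply: (eq_sub0 (congr1 (@emb _ _) (esym E))).
rewrite /L; sqring.
Qed.

Lemma brD0 g Dg x : is_D pair rho g Dg -> br Dg x = 0.
Proof.
move=> hD.
have h1 : is_D pair rho (pair Dg x) (br x Dg).
  move=> y; have := pairI x Dg y.
  rewrite (hD x) (hD y) (hD (br x y)) rho_hom => E.
  apply/eqP; rewrite -subr_eq0; apply/eqP; apply: (eq_sub0 (esym E)); ring.
have E := brS h1; apply: (@addIr _ (br x Dg)); by rewrite E add0r.
Qed.

Lemma brskew phi psi : pair phi psi = 0 -> br phi psi = - br psi phi.
Proof.
move=> h0; have hD : is_D pair rho (pair phi psi) 0 by move=> x; rewrite h0 pair01 rho02.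
by have := brS hD; move/eqP; rewrite addr_eq0 => /eqP.
Qed.
End Gen.

Section Split.
Variables (K : numFieldType) (C : comAlgType K) (U U1 U2 : lmodType C)
  (pair : U -> U -> C) (br : U -> U -> U) (rho : U -> C -> C)
  (i1 : U1 -> U) (i2 : U2 -> U) (p1 : U -> U1) (p2 : U -> U2).
Hypotheses (HC : is_courant pair br rho)
 (HC1 : is_courant (fun a b => pair (i1 a) (i1 b)) (fun a b => p1 (br (i1 a) (i1 b)))
          (fun a => rho (i1 a)))
 (HC2 : is_courant (fun a b => pair (i2 a) (i2 b)) (fun a b => p2 (br (i2 a) (i2 b)))
          (fun a => rho (i2 a)))
 (Hi1 : Clinear i1) (Hi2 : Clinear i2) (Hp1 : Clinear p1) (Hp2 : Clinear p2)
 (H11 : forall a, p1 (i1 a) = a) (H22 : forall b, p2 (i2 b) = b)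
 (H21 : forall a, p2 (i1 a) = 0) (H12 : forall b, p1 (i2 b) = 0)
 (Hsum : forall phi, i1 (p1 phi) + i2 (p2 phi) = phi)
 (Horth : forall a b, pair (i1 a) (i2 b) = 0).

Lemma nabD a : {morph nabla_to br i1 i2 p2 a : x y / x + y}.
Proof. by move=> x y; rewrite /nabla_to (ClinD Hi2) (brD2 HC) (ClinD Hp2). Qed.
Lemma nabN a : {morph nabla_to br i1 i2 p2 a : x / - x}.
Proof. by case: (addf0N (nabD a)). Qed.
Lemma nabB a : {morph nabla_to br i1 i2 p2 a : x y / x - y}.
Proof. by move=> x y; rewrite nabD nabN. Qed.
Lemma nabZ a f x : nabla_to br i1 i2 p2 a (f *: x)
   = rho (i1 a) f *: x + f *: nabla_to br i1 i2 p2 a x.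
Proof. by rewrite /nabla_to (ClinZ Hi2) (brZ2 HC) (ClinD Hp2) !(ClinZ Hp2) H22. Qed.

Lemma nabD1 x : {morph nabla_to br i1 i2 p2 ^~ x : a a' / a + a'}.
Proof. by move=> a a'; rewrite /nabla_to (ClinD Hi1) (brD1 HC) (ClinD Hp2). Qed.
Lemma nabN1 x : {morph nabla_to br i1 i2 p2 ^~ x : a / - a}.
Proof. by case: (addf0N (nabD1 x)). Qed.
Lemma nabB1 x : {morph nabla_to br i1 i2 p2 ^~ x : a a' / a - a'}.
Proof. by move=> a a'; rewrite nabD1 nabN1. Qed.
Lemma nabZ1 g a x : nabla_to br i1 i2 p2 (g *: a) x = g *: nabla_to br i1 i2 p2 a x.
Proof.
rewrite /nabla_to (ClinZ Hi1).
have h1 : pair (g *: i1 a) (i2 x) = 0 by rewrite (pairZ1 HC) Horth mulr0.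
have h2 : pair (i2 x) (i1 a) = 0 by rewrite (pair_sym HC) Horth.
rewrite (brskew HC h1) (brZ2 HC) (brskew HC h2) (ClinN Hp2) (ClinD Hp2) !(ClinZ Hp2) (ClinN Hp2) H21.
modring.
Qed.

Lemma proj2_pair z y : pair z (i2 y) = pair (i2 (p2 z)) (i2 y).
Proof. by rewrite -{1}(Hsum z) (pairD1 HC) Horth add0r. Qed.

Lemma nab_metric a x y : rho (i1 a) (pair (i2 x) (i2 y)) =
  pair (i2 (nabla_to br i1 i2 p2 a x)) (i2 y) + pair (i2 x) (i2 (nabla_to br i1 i2 p2 a y)).
Proof.
rewrite (pairI HC) (proj2_pair (br (i1 a) (i2 x)) y).
rewrite (pair_sym HC (i2 x) (br (i1 a) (i2 y))) (proj2_pair (br (i1 a) (i2 y)) x).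
by rewrite (pair_sym HC (i2 (p2 _)) (i2 x)).
Qed.

Lemma rho_hom1 a b f : rho (i1 (br1 br i1 p1 a b)) f
  = rho (i1 a) (rho (i1 b) f) - rho (i1 b) (rho (i1 a) f).
Proof. exact: (rho_hom HC1 a b f). Qed.

Lemma nabD0 g Dg x : is_D pair rho g Dg -> nabla_to br i1 i2 p2 (p1 Dg) x = 0.
Proof.
move=> hD; rewrite /nabla_to.
have -> : i1 (p1 Dg) = Dg - i2 (p2 Dg) by rewrite -{2}(Hsum Dg) addrK.
rewrite (brB1 HC) (brD0 HC _ hD) sub0r (ClinN Hp2).
have hD2 : is_D (fun a b => pair (i2 a) (i2 b)) (fun a => rho (i2 a)) g (p2 Dg).
  by move=> y /=; rewrite -proj2_pair hD.
by have /= -> := brD0 HC2 x hD2; rewrite oppr0.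
Qed.

Lemma br1S a b Dh : is_D pair rho (pair (i1 a) (i1 b)) Dh ->
  br1 br i1 p1 a b + br1 br i1 p1 b a = p1 Dh.
Proof. by move=> hD; rewrite /br1 -(ClinD Hp1) (brS HC hD). Qed.

Notation RT := (R_to br i1 i2 p1 p2).

Lemma R2lin c a b b' z : RT a (c *: b + b') z = c *: RT a b z + RT a b' z.
Proof.
have hb : br1 br i1 p1 a (c *: b + b') = rho (i1 a) c *: b + c *: br1 br i1 p1 a b + br1 br i1 p1 a b'.
  by rewrite /br1 (ClinD Hi1) (ClinZ Hi1) (brD2 HC) (brZ2 HC) !(ClinD Hp1) !(ClinZ Hp1) H11.
rewrite /R_to hb !(nabD1, nabZ1, nabD, nabZ, nabB, nabN).
modring.
Qed.

Lemma R3lin c a b z z' : RT a b (c *: z + z') = c *: RT a b z + RT a b z'.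
Proof.
rewrite /R_to !(nabD, nabZ) rho_hom1.
modring.
Qed.

Lemma R4skew a b z : RT a b z = - RT b a z.
Proof.
have [Dh hD] := Dex HC (pair (i1 a) (i1 b)).
apply/eqP; rewrite -addr_eq0; apply/eqP.
transitivity (- nabla_to br i1 i2 p2 (br1 br i1 p1 a b + br1 br i1 p1 b a) z).
  by rewrite nabD1 /R_to; modring.
by rewrite (br1S hD) (nabD0 _ hD) oppr0.
Qed.

Lemma R1lin c a a' b z : RT (c *: a + a') b z = c *: RT a b z + RT a' b z.
Proof.
rewrite (R4skew (c *: a + a') b) R2lin (R4skew b a) (R4skew b a').
modring.
Qed.

Lemma R5 a b x y : pair (i2 (RT a b x)) (i2 y) + pair (i2 x) (i2 (RT a b y)) = 0.
Proof.
have e5 := nab_metric (br1 br i1 p1 a b) x y.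
rewrite rho_hom1 (nab_metric b x y) (nab_metric a x y) !(rhoD2 HC) in e5.
rewrite (nab_metric a (nabla_to br i1 i2 p2 b x) y) (nab_metric a x (nabla_to br i1 i2 p2 b y)) in e5.
rewrite (nab_metric b (nabla_to br i1 i2 p2 a x) y) (nab_metric b x (nabla_to br i1 i2 p2 a y)) in e5.
rewrite /R_to !(ClinB Hi2) !(pairB1 HC) !(pairB2 HC).
apply: (eq_sub0 e5); ring.
Qed.

Lemma Rto_sec : wedge2_o_section (fun a b => pair (i2 a) (i2 b)) RT.
Proof.
split.
- exact: R1lin.
- exact: R2lin.
- exact: R3lin.
- exact: R4skew.
- exact: R5.
Qed.
End Split.

Theorem mainTheorem4 (K : numFieldType) (C : comAlgType K) (U U1 U2 : lmodType C)
  (pair : U -> U -> C) (br : U -> U -> U) (rho : U -> C -> C)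
  (i1 : U1 -> U) (i2 : U2 -> U) (p1 : U -> U1) (p2 : U -> U2) :
  splitting_setting pair br rho i1 i2 p1 p2 ->
  wedge2_o_section (fun a b => pair (i2 a) (i2 b)) (R_to br i1 i2 p1 p2) /\
  wedge2_o_section (fun a b => pair (i1 a) (i1 b)) (R_from br i1 i2 p1 p2).
Proof.
case=> HC [[Hi1 [Hi2 [Hp1 Hp2]]] [[H11 [H22 [H21 [H12 Hsum]]]] [Horth [HC1 HC2]]]].
split.
  exact: (Rto_sec HC HC1 HC2 Hi1 Hi2 Hp1 Hp2 H11 H22 H21 Hsum Horth).
have Hsum' : forall phi, i2 (p2 phi) + i1 (p1 phi) = phi by move=> phi; rewrite addrC Hsum.
have Horth' : forall a b, pair (i2 a) (i1 b) = 0 by move=> a b; rewrite (pair_sym HC) Horth.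
exact: (Rto_sec HC HC2 HC1 Hi2 Hi1 Hp2 Hp1 H22 H11 H12 Hsum' Horth').
Qed.
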